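(* Let $H:\mathbb{R}^{2d}\to\mathbb{R}$ be continuous with $H(q,-p)=H(q,p)$, and let $\Psi:\mathbb{R}^{2d}\to\mathbb{R}^{2d}$ be a continuous bijection that preserves Lebesgue measure and is reversible with respect to $S(q,p)=(q,-p)$. Let $\Delta=H\circ\Psi-H$. If $m_\Delta=\int_{\mathbb{R}^{2d}}\Delta(q,p)e^{-H(q,p)}dq\,dp$ exists, then $$0\le m_\Delta\le\int_{\mathbb{R}^{2d}}\Delta(q,p)^2e^{-H(q,p)}dq\,dp,$$ and the first inequality is strict unless $\Delta$ vanishes identically. *)

(* Defs.v *)
From HB Require Import structures.
From mathcomp Require Import all_boot all_order all_algebra.
From mathcomp Require Import all_classical all_reals all_analysis.
Set Implicit Arguments. Unset Strict Implicit. Unset Printing Implicit Defensive.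
Import Order.TTheory GRing.Theory Num.Theory.
Local Open Scope classical_set_scope.
Local Open Scope ring_scope.

(* Phase space R^{2d} is represented as pairs (q, p) of d-tuples of reals,
   with the product sigma-algebra of the Borel sigma-algebras of the coordinates. *)
Definition phase (R : realType) (d : nat) := (d.-tuple R * d.-tuple R)%type.

Definition flipS (R : realType) (d : nat) (x : phase R d) : phase R d :=
  (x.1, [tuple of map (fun r : R => - r) x.2]).

Definition phase_close (R : realType) (d : nat) (x y : phase R d) (e : R) :=
  (forall i : 'I_d, `|tnth x.1 i - tnth y.1 i| < e) /\
  (forall i : 'I_d, `|tnth x.2 i - tnth y.2 i| < e).

(* Continuity of a real function on R^{2d} (w.r.t. the usual topology,
   expressed with the equivalent sup-norm). *)
Definition phase_continuous (R : realType) (d : nat) (f : phase R d -> R) :=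
  forall x (e : R), 0 < e -> exists2 del : R, 0 < del &
    forall y, phase_close x y del -> `|f y - f x| < e.

Definition phase_map_continuous (R : realType) (d : nat)
  (F : phase R d -> phase R d) :=
  forall x (e : R), 0 < e -> exists2 del : R, 0 < del &
    forall y, phase_close x y del -> phase_close (F x) (F y) e.

Definition box (R : realType) (d : nat) (a b : d.-tuple R) : set (d.-tuple R) :=
  [set t | forall i : 'I_d, tnth a i <= tnth t i <= tnth b i].

(* mu is Lebesgue measure on R^{2d} = R^d x R^d: it gives every product of
   closed boxes its volume. (Boxes form a generating pi-system of the Borel
   sigma-algebra, so this characterizes Lebesgue measure on Borel sets.) *)
Definition is_lebesgue (R : realType) (d : nat)
  (mu : set (phase R d) -> \bar R) :=
  forall a b c e : d.-tuple R,
    (forall i : 'I_d, tnth a i <= tnth b i) ->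
    (forall i : 'I_d, tnth c i <= tnth e i) ->
    mu (box a b `*` box c e) =
      ((\prod_(i < d) (tnth b i - tnth a i)) *
       (\prod_(i < d) (tnth e i - tnth c i)))%:E.

(* Main.v *)
Require Import Defs.
From HB Require Import structures.
From mathcomp Require Import all_boot all_order all_algebra.
From mathcomp Require Import all_classical all_reals all_analysis.
From mathcomp Require Import measurable_realfun lra ring.
Import Order.TTheory GRing.Theory Num.Theory.
Local Open Scope classical_set_scope.
Local Open Scope ring_scope.

Section phase_meas.
Context (R : realType) (d : nat).
Local Notation E := (phase R d).

Definition sopen (U : set E) := forall x, U x ->
  exists2 del : R, 0 < del & forall y, phase_close x y del -> U y.

Definition Gbox : set (set E) :=
  [set A | exists a b c e, A = box a b `*` box c e].

Lemma box_measurable (a b : d.-tuple R) : measurable (box a b).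
Proof.
have -> : box a b = \bigcap_(i in [set: 'I_d])
   ((@tnth d R)^~ i @^-1` [set` `[tnth a i, tnth b i]]).
  apply/seteqP; split => x /=.
  - by move=> h i _; rewrite /= in_itv /=; exact: h.
  - by move=> h i; have := h i I; rewrite /= in_itv.
apply: fin_bigcap_measurable; first exact: finite_finset.
move=> i _; rewrite -[X in measurable X]setTI.
exact: (measurable_tnth i measurableT (measurable_itv _)).
Qed.

Lemma Gbox_measurable A : Gbox A -> measurable A.
Proof.
by move=> [a [b [c [e ->]]]]; apply: measurableX; exact: box_measurable.
Qed.

Definition lo (t : d.-tuple R) (r : R) := [tuple tnth t j - r | j < d].
Definition hi (t : d.-tuple R) (r : R) := [tuple tnth t j + r | j < d].

Definition cube (c : E) (r : R) : set E := [set y : E | forall j,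
  `|tnth y.1 j - tnth c.1 j| <= r /\ `|tnth y.2 j - tnth c.2 j| <= r].

Lemma cubeE c r : cube c r =
  box (lo c.1 r) (hi c.1 r) `*` box (lo c.2 r) (hi c.2 r).
Proof.
apply/seteqP; split => y /=.
- move=> h; split => j; rewrite !tnth_mktuple -ler_distl; by case: (h j).
- move=> [h1 h2] j; have := h1 j; have := h2 j.
  by rewrite !tnth_mktuple -!ler_distl.
Qed.

Lemma cube_G c r : Gbox (cube c r).
Proof. by rewrite cubeE; do 4 eexists. Qed.

Definition ratc (t : d.-tuple rat) : d.-tuple R := [tuple ratr (tnth t j) | j < d].

Definition rcube (i : (d.-tuple rat * d.-tuple rat) * rat) : set E :=
  cube (ratc i.1.1, ratc i.1.2) (ratr i.2).

Lemma sopen_G U : sopen U -> <<s Gbox >> U.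
Proof.
move=> oU.
pose F i : set E := if pselect (rcube i `<=` U) then rcube i else set0.
have -> : U = \bigcup_i F i.
  apply/seteqP; split; last first.
    by move=> x [i _]; rewrite /F; case: pselect => // h /h.
  move=> x Ux; have [del del0 hdel] := oU x Ux.
  have [r] := @rat_in_itvoo R 0 (del / 2) ltac:(by rewrite divr_gt0).
  rewrite in_itv /= => /andP[r0 r2].
  have ex1 : forall j, exists q : rat, ratr q \in `](tnth x.1 j - ratr r), (tnth x.1 j + ratr r)[.
    move=> j; apply: rat_in_itvoo; lra.
  have ex2 : forall j, exists q : rat, ratr q \in `](tnth x.2 j - ratr r), (tnth x.2 j + ratr r)[.
    move=> j; apply: rat_in_itvoo; lra.
  have [q1 hq1] := choice ex1.
  have [q2 hq2] := choice ex2.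
  pose i := (([tuple q1 j | j < d], [tuple q2 j | j < d]), r).
  have xin : rcube i x.
    move=> j; rewrite /rcube /cube /ratc /= !tnth_mktuple.
    move: (hq1 j) (hq2 j); rewrite !in_itv /= => /andP[a1 b1] /andP[a2 b2].
    split; rewrite ler_distl; apply/andP; split; lra.
  have sub : rcube i `<=` U.
    move=> y; rewrite /rcube /cube /ratc /= => hy; apply: hdel; split => j.
    - have [h1 _] := hy j; have := hq1 j.
      rewrite !in_itv /= => /andP[a1 b1].
      move: h1; rewrite /= !tnth_mktuple ler_distl => /andP[c1 d1].
      rewrite ltr_norml; apply/andP; split; lra.
    - have [_ h1] := hy j; have := hq2 j.
      rewrite !in_itv /= => /andP[a1 b1].
      move: h1; rewrite /= !tnth_mktuple ler_distl => /andP[c1 d1].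
      rewrite ltr_norml; apply/andP; split; lra.
  exists i => //; rewrite /F; case: pselect => //.
pose F' n : set E := if pickle_inv n is Some i then F i else set0.
have -> : \bigcup_i F i = \bigcup_n F' n.
  apply/seteqP; split => x [i _ h].
  - by exists (pickle i) => //; rewrite /F' pickleK_inv.
  - by move: h; rewrite /F'; case: (pickle_inv i) => // j h; exists j.
apply: sigma_algebra_bigcup => n; rewrite /F'.
case: (pickle_inv n) => [i|]; last exact: sigma_algebra0.
rewrite /F; case: pselect => h; last exact: sigma_algebra0.
by apply: sub_sigma_algebra; exact: cube_G.
Qed.

Lemma measurableR_E : (measurable : set (set R)) = <<s @RGenOpens.G R >>.
Proof. exact: (@RGenOpens.measurableE R). Qed.

Lemma cont_sopen (g : E -> R) a b : phase_continuous g ->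
  sopen [set x | g x \in `]a, b[].
Proof.
move=> cg x; rewrite /= in_itv /= => /andP[ax xb].
have [del del0 hd] := cg x (Num.min (g x - a) (b - g x))
  ltac:(by rewrite lt_min !subr_gt0 ax xb).
exists del => // y /hd; rewrite lt_min => /andP[]; rewrite !ltr_norml => /andP[h1 h2] /andP[h3 h4].
rewrite /= in_itv /=; apply/andP; split; lra.
Qed.

Lemma cont_G (g : E -> R) : phase_continuous g ->
  forall Y, measurable Y -> <<s Gbox >> (g @^-1` Y).
Proof.
move=> cg Y mY.
suff : image_set_system setT g <<s Gbox >> Y by rewrite /image_set_system /= setTI.
move: Y mY; rewrite measurableR_E; apply: smallest_sub.
  apply: sigma_algebra_image; exact: smallest_sigma_algebra.
move=> _ [a [b ->]]; rewrite /image_set_system /= setTI; apply: sopen_G.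
exact: cont_sopen.
Qed.

Lemma Gsub : <<s Gbox >> `<=` (measurable : set (set E)).
Proof.
apply: smallest_sub; [exact: sigma_algebra_measurable|exact: Gbox_measurable].
Qed.

Lemma cont_measurable (g : E -> R) : phase_continuous g -> measurable_fun setT g.
Proof. by move=> cg _ Y mY; rewrite setTI; apply: Gsub; exact: cont_G. Qed.

Lemma coord1_cont j : phase_continuous (fun x : E => tnth x.1 j).
Proof. by move=> x e e0; exists e => // y [h _]; rewrite distrC; exact: h. Qed.

Lemma coord2_cont j : phase_continuous (fun x : E => tnth x.2 j).
Proof. by move=> x e e0; exists e => // y [_ h]; rewrite distrC; exact: h. Qed.

Lemma measurable_G : (measurable : set (set E)) = <<s Gbox >>.
Proof.
rewrite eqEsubset; split; last exact: Gsub.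
apply: smallest_sub; first exact: smallest_sigma_algebra.
rewrite subUset; split.
- move=> _ [B mB <-].
  rewrite (@setTI (d.-tuple R * d.-tuple R)%type).
  suff : image_set_system setT fst <<s Gbox >> B.
    by rewrite /image_set_system /= (@setTI (d.-tuple R * d.-tuple R)%type).
  move: B mB.
  suff h : <<s \big[setU/set0]_(i < d) preimage_set_system setT
     (fun x : d.-tuple R => tnth x i) measurable >> `<=`
     image_set_system setT fst <<s Gbox >> by exact: h.
  apply: smallest_sub.
    apply: sigma_algebra_image; exact: smallest_sigma_algebra.
  apply: (big_ind (fun S => S `<=` _)) => //.
    by move=> S1 S2 h1 h2; rewrite subUset; split.
  move=> i _ _ [Y mY <-]; rewrite /image_set_system /=.
  rewrite (@setTI (d.-tuple R * d.-tuple R)%type) (@setTI (d.-tuple R)).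
  have h := @cont_G (fun x : E => tnth x.1 i) (coord1_cont i) Y mY. exact h.
- move=> _ [B mB <-].
  rewrite (@setTI (d.-tuple R * d.-tuple R)%type).
  suff : image_set_system setT snd <<s Gbox >> B.
    by rewrite /image_set_system /= (@setTI (d.-tuple R * d.-tuple R)%type).
  move: B mB.
  suff h : <<s \big[setU/set0]_(i < d) preimage_set_system setT
     (fun x : d.-tuple R => tnth x i) measurable >> `<=`
     image_set_system setT snd <<s Gbox >> by exact: h.
  apply: smallest_sub.
    apply: sigma_algebra_image; exact: smallest_sigma_algebra.
  apply: (big_ind (fun S => S `<=` _)) => //.
    by move=> S1 S2 h1 h2; rewrite subUset; split.
  move=> i _ _ [Y mY <-]; rewrite /image_set_system /=.
  rewrite (@setTI (d.-tuple R * d.-tuple R)%type) (@setTI (d.-tuple R)).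
  have h := @cont_G (fun x : E => tnth x.2 i) (coord2_cont i) Y mY. exact h.
Qed.

Lemma mapcont_measurable (F : E -> E) : phase_map_continuous F ->
  measurable_fun setT F.
Proof.
move=> hF; apply/measurable_fun_pairP; split; apply/measurable_fun_tnthP => j;
  apply: cont_measurable => x e e0; have [del d0 h] := hF x e e0;
  exists del => // y /h [h1 h2]; rewrite /= distrC; [exact: h1|exact: h2].
Qed.

Lemma flip_cont : phase_map_continuous (@flipS R d).
Proof.
move=> x e e0; exists e => // y [h1 h2]; split => j /=; first exact: h1.
by rewrite !tnth_map -opprD normrN; exact: h2.
Qed.

Lemma flip_measurable : measurable_fun setT (@flipS R d).
Proof. exact: mapcont_measurable flip_cont. Qed.

Definition neg (t : d.-tuple R) := [tuple - tnth t j | j < d].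

Lemma flip_pre a b c e : (@flipS R d) @^-1` (box a b `*` box c e) =
  box a b `*` box (neg e) (neg c).
Proof.
apply/seteqP; split => y /= [h1 h2]; split => // j; have := h2 j;
  rewrite /= !tnth_mktuple ?tnth_map => /andP[u v]; apply/andP; split; lra.
Qed.

Lemma box0 (a b : d.-tuple R) j : tnth b j < tnth a j -> box a b = set0.
Proof.
move=> h; apply/seteqP; split => y //= /(_ j) /andP[u v]; lra.
Qed.

Definition mx (a a' : d.-tuple R) := [tuple Num.max (tnth a j) (tnth a' j) | j < d].
Definition mn (a a' : d.-tuple R) := [tuple Num.min (tnth a j) (tnth a' j) | j < d].

Lemma boxI a b a' b' : box a b `&` box a' b' = box (mx a a') (mn b b').
Proof.
apply/seteqP; split => y /=.
- move=> [h h'] j; have /andP[u v] := h j; have /andP[u' v'] := h' j.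
  by rewrite !tnth_mktuple ge_max le_min u v u' v'.
- move=> h; split => j; have := h j;
  by rewrite !tnth_mktuple ge_max le_min => /andP[/andP[u u'] /andP[v v']];
    rewrite ?u ?u' ?v ?v'.
Qed.

Lemma Gbox_setI : setI_closed Gbox.
Proof.
move=> _ _ [a [b [c [e ->]]]] [a' [b' [c' [e' ->]]]].
by rewrite -setXI !boxI; do 4 eexists.
Qed.

Definition c0 : E := ([tuple 0 | j < d], [tuple 0 | j < d]).

Lemma cube_cover : \bigcup_k cube c0 k%:R = setT.
Proof.
apply/seteqP; split => // y _.
pose M := \sum_(j < d) (`|tnth y.1 j| + `|tnth y.2 j|).
have hle : forall j, `|tnth y.1 j| + `|tnth y.2 j| <= M.
  move=> j; rewrite /M (bigD1 j) //= lerDl.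
  by apply: sumr_ge0 => i _; apply: addr_ge0.
exists (Num.truncn M).+1 => // j; rewrite /c0 /= !tnth_mktuple !subr0.
have := truncnS_gt M; have := hle j.
have := normr_ge0 (tnth y.1 j); have := normr_ge0 (tnth y.2 j).
move=> *; split; lra.
Qed.

Lemma flip_invariant (mu : {measure set E -> \bar R}) : is_lebesgue mu ->
  forall A, measurable A -> mu ((@flipS R d) @^-1` A) = mu A.
Proof.
move=> Hmu A mA; apply/esym.
pose nu := @measure_function_pushforward__canonical__measure_function_Measure
  _ _ _ _ _ mu _ flip_measurable.
apply: (measure_unique Gbox (fun k => cube c0 k%:R) measurable_G Gbox_setI
   _ cube_cover mu nu) => //.
- by move=> k; exact: cube_G.
- move=> _ [a [b [c [e ->]]]]; rewrite /nu /= /pushforward flip_pre.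
  case: (pselect (forall j, tnth a j <= tnth b j)) => hab; last first.
    have [j /negP hj] : exists j, ~ (tnth a j <= tnth b j) by apply/existsNP.
    by rewrite (@box0 a b j) ?set0X // ltNge.
  case: (pselect (forall j, tnth c j <= tnth e j)) => hce; last first.
    have [j /negP hj] : exists j, ~ (tnth c j <= tnth e j) by apply/existsNP.
    rewrite (@box0 c e j) ?setX0 ?ltNge // (@box0 (neg e) (neg c) j) ?setX0 //.
    by rewrite !tnth_mktuple ltrN2 ltNge.
  rewrite !Hmu //; last by move=> j; rewrite !tnth_mktuple lerN2.
  congr (_ * _)%:E; apply: eq_bigr => j _; rewrite !tnth_mktuple.
  by rewrite opprK addrC.
- move=> k; rewrite cubeE Hmu ?ltry // => j; rewrite !tnth_mktuple;
  have := ler0n R k; lra.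
Qed.

End phase_meas.
Arguments mapcont_measurable {R d F}. Arguments cont_measurable {R d g}.
Arguments flip_measurable {R d}. Arguments flip_invariant {R d}.
Arguments cube {R d}. Arguments cube_G {R d}. Arguments cubeE {R d}. Arguments Gbox_measurable {R d}.

Section transfer.
Local Open Scope ereal_scope.
Context dd (X : measurableType dd) (R : realType) (mu : {measure set X -> \bar R}).
Variables (T : X -> X) (mT : measurable_fun setT T).
Hypothesis Tp : forall A, measurable A -> mu (T @^-1` A) = mu A.

Let nu := @measure_function_pushforward__canonical__measure_function_Measure
  _ _ _ _ _ mu _ mT.

Let munu : forall A, measurable A -> A `<=` setT -> nu A = mu A.
Proof. by move=> A mA _; rewrite /nu /= /pushforward Tp. Qed.

Lemma transfer_ge0 (f : X -> \bar R) : measurable_fun setT f ->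
  (forall x, 0 <= f x) -> \int[mu]_x f x = \int[mu]_x f (T x).
Proof.
move=> mf f0.
transitivity (\int[nu]_x f x).
  by apply: eq_measure_integral => A mA h; rewrite munu.
by rewrite (ge0_integral_pushforward mT mu measurableT mf) // preimage_setT.
Qed.

Lemma transfer_int (f : X -> \bar R) : mu.-integrable setT f ->
  mu.-integrable setT (f \o T) /\ \int[mu]_x f x = \int[mu]_x f (T x).
Proof.
move=> /[dup] intf /integrableP[mf fi].
have intT : mu.-integrable setT (f \o T).
  apply/integrableP; split; first exact: measurableT_comp.
  have -> : \int[mu]_x `|(f \o T) x| = \int[mu]_x `|f x|.
    by rewrite [RHS](transfer_ge0 (fun x => `|f x|)) //; exact: measurableT_comp.
  exact: fi.
split => //.
transitivity (\int[nu]_x f x).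
  by apply: eq_measure_integral => A mA h; rewrite munu.
rewrite (integral_pushforward mT mf) ?preimage_setT //.
Qed.

End transfer.
Arguments transfer_ge0 {dd X R mu T}. Arguments transfer_int {dd X R mu T}.

Lemma key_ineq (R : realType) (t : R) :
  [/\ 0 <= t * (1 - expR (- t)),
      t * (1 - expR (-t)) <= t ^+ 2 * (1 + expR (-t))
    & (t != 0 -> 0 < t * (1 - expR (-t)))].
Proof.
set v := expR (- t).
have v0 : 0 < v by exact: expR_gt0.
have h1 : 1 - t <= v by have := expR_ge1Dx (- t).
have h2 : (1 + t) * v <= 1.
  have e : expR t * v = 1 by rewrite /v -expRD subrr expR0.
  by have := ler_wpM2r (ltW v0) (expR_ge1Dx t); rewrite e.
have [tp|tn] := leP 0 t.
  have hv : v <= 1 by nra.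
  have p1 : 0 <= t * (v - (1 - t)) by apply: mulr_ge0; lra.
  have p2 : 0 <= t ^+ 2 * v by apply: mulr_ge0; [exact: sqr_ge0|lra].
  have p3 : 0 <= t * (1 - v) by apply: mulr_ge0; lra.
  split => //; first nra.
  move=> tn0; have tp' : 0 < t by rewrite lt_neqAle eq_sym tn0 tp.
  have hv' : v < 1 by nra.
  by apply: mulr_gt0; lra.
have p1 : 0 <= (- t) * (1 - (1 + t) * v) by apply: mulr_ge0; lra.
have p2 : 0 <= t ^+ 2 by exact: sqr_ge0.
have p3 : 0 < t * (1 - v) by rewrite nmulr_rgt0 //; lra.
split; [lra|nra|by []].
Qed.

Lemma fin_half (R : realType) (a b : \bar R) : a \is a fin_num -> (0 <= b)%E ->
  (a + a <= b + b)%E -> (a <= b)%E.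
Proof.
case: a => [s| |] // _; case: b => [r| |] //; rewrite ?leey //.
by rewrite -!EFinD !lee_fin => ? ?; lra.
Qed.

Theorem theorem6p1 (R : realType) (d : nat)
  (mu : {measure set (phase R d) -> \bar R}) (Hmu : is_lebesgue mu)
  (H : phase R d -> R) (Psi : phase R d -> phase R d) :
  phase_continuous H ->
  (forall x, H (flipS x) = H x) ->
  phase_map_continuous Psi ->
  bijective Psi ->
  (forall A, measurable A -> mu (Psi @^-1` A) = mu A) ->
  (forall x, Psi (flipS (Psi x)) = flipS x) ->
  let Delta := fun x => H (Psi x) - H x in
  mu.-integrable setT (fun x => (Delta x * expR (- H x))%:E) ->
  let m := (\int[mu]_x (Delta x * expR (- H x))%:E)%E in
  [/\ (0 <= m)%E,
      (m <= \int[mu]_x ((Delta x) ^+ 2 * expR (- H x))%:E)%E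
    & (exists x, Delta x != 0) -> (0 < m)%E].
Proof.
move=> cH Hflip cPsi bijPsi Hpres Hrev Delta intg m.
have mPsi := mapcont_measurable cPsi.
have mH := cont_measurable cH.
have mflip := @flip_measurable R d.
pose T := fun x => flipS (Psi x).
have mT : measurable_fun setT T := measurableT_comp mflip mPsi.
have Tp : forall A, measurable A -> mu (T @^-1` A) = mu A.
  move=> A mA.
  have mfA : measurable ((@flipS R d) @^-1` A).
    by have := mflip measurableT _ mA; rewrite setTI.
  rewrite (_ : T @^-1` A = Psi @^-1` ((@flipS R d) @^-1` A)) //.
  by rewrite Hpres // flip_invariant.
have DT : forall x, Delta (T x) = - Delta x.
  by move=> x; rewrite /Delta /T Hrev !Hflip opprB.
have HT : forall x, H (T x) = H (Psi x) by move=> x; rewrite /T Hflip.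
have mD : measurable_fun setT Delta.
  exact: measurable_funB (measurableT_comp mH mPsi) mH.
have mr : measurable_fun setT (fun x => expR (- H x)).
  by apply: measurableT_comp; [exact: measurable_expR|exact: measurable_funN].
pose g x := Delta x * expR (- H x).
pose q x := Delta x ^+ 2 * expR (- H x).
have mg : measurable_fun setT g by exact: measurable_funM.
have mq : measurable_fun setT q.
  by apply: measurable_funM => //; exact: measurable_funX.
have gE : forall x, g x + g (T x) =
    expR (- H x) * (Delta x * (1 - expR (- Delta x))).
  move=> x; rewrite /g DT HT.
  have -> : - H (Psi x) = - H x + - Delta x by rewrite /Delta; ring.
  rewrite expRD; ring.
have qE : forall x, q x + q (T x) =
    expR (- H x) * (Delta x ^+ 2 * (1 + expR (- Delta x))).
  move=> x; rewrite /q DT HT.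
  have -> : - H (Psi x) = - H x + - Delta x by rewrite /Delta; ring.
  rewrite expRD; ring.
have gpos : forall x, 0 <= g x + g (T x).
  move=> x; rewrite gE; apply: mulr_ge0; first exact: ltW (expR_gt0 _).
  by have [] := key_ineq _ (Delta x).
have gle : forall x, g x + g (T x) <= q x + q (T x).
  move=> x; rewrite gE qE; apply: ler_wpM2l; first exact: ltW (expR_gt0 _).
  by have [] := key_ineq _ (Delta x).
have [intgT mE] := transfer_int mT Tp _ intg.
have mfin : m \is a fin_num by exact: integrable_fin_num intg.
have mgT : measurable_fun setT (fun x => g (T x)) by exact: measurableT_comp.
have sum2 : (m + m = \int[mu]_x (g x + g (T x))%:E)%E.
  rewrite {2}/m mE -integralD //=.
have int_ge0 : (0 <= m + m)%E.
  by rewrite sum2; apply: integral_ge0 => x _; rewrite lee_fin.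
have m_ge0 : (0 <= m)%E.
  move: int_ge0; rewrite -(fineK mfin) -EFinD !lee_fin => ?; lra.
split => //.
- set Q := (\int[mu]_x _)%E.
  have Q0 : (0 <= Q)%E.
    by apply: integral_ge0 => x _; rewrite lee_fin; exact: (mulr_ge0 (sqr_ge0 _) (ltW (expR_gt0 _))).
  have mqE : measurable_fun setT (fun x => (q x)%:E) by exact/measurable_EFinP.
  have mqTE : measurable_fun setT (fun x => (q (T x))%:E).
    by apply/measurable_EFinP; exact: measurableT_comp.
  have q0 : forall x, 0 <= q x by move=> x; exact: (mulr_ge0 (sqr_ge0 _) (ltW (expR_gt0 _))).
  have sumQ : (Q + Q = \int[mu]_x (q x + q (T x))%:E)%E.
    rewrite {2}/Q (transfer_ge0 mT Tp _ mqE); last by move=> x; rewrite lee_fin.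
    by rewrite -ge0_integralD // => x _; rewrite lee_fin; exact: q0.
  apply: fin_half => //; rewrite sum2 sumQ.
  apply: ge0_le_integral => //.
  + by move=> x _; rewrite lee_fin.
  + by apply/measurable_EFinP; exact: measurable_funD.
  + by apply/measurable_EFinP; apply: measurable_funD => //; exact: measurableT_comp.
  + by move=> x _; rewrite lee_fin.
- move=> [x0 Dx0]; rewrite lt_neqAle m_ge0 andbT; apply/eqP => m0.
  pose f x := (g x + g (T x))%:E.
  have mf : measurable_fun setT f.
    by apply/measurable_EFinP; exact: measurable_funD.
  have : (\int[mu]_x `|f x| = 0)%E.
    rewrite (eq_integral f); last by move=> x _; rewrite gee0_abs // lee_fin.
    by rewrite -sum2 -m0 adde0.
  move=> /(ae_eq_integral_abs mu measurableT mf) [N [mN N0 hN]].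
  pose a := `|Delta x0|.
  have a0 : 0 < a by rewrite normr_gt0.
  have [d1 d10 h1] := cH x0 (a / 2) ltac:(by rewrite divr_gt0).
  have [d2 d20 h2] := cH (Psi x0) (a / 2) ltac:(by rewrite divr_gt0).
  have [d3 d30 h3] := cPsi x0 d2 d20.
  pose del := Num.min d1 d3.
  have del0 : 0 < del by rewrite lt_min d10 d30.
  have sub : cube x0 (del / 2) `<=` N.
    move=> y hy; apply: hN => /= /(_ I).
    have cl : forall e, del <= e -> phase_close x0 y e.
      move=> e de; split => j; have [u v] := hy j; rewrite distrC.
      + by apply: (le_lt_trans u); lra.
      + by apply: (le_lt_trans v); lra.
    have c1 := h1 y (cl d1 ltac:(by rewrite /del ge_min lexx)).
    have c2 := h2 (Psi y) (h3 y (cl d3 ltac:(by rewrite /del ge_min lexx orbT))).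
    have Dy : Delta y != 0.
      apply/eqP => Dy0.
      have : `|Delta y - Delta x0| < a.
        rewrite /Delta.
        have -> : H (Psi y) - H y - (H (Psi x0) - H x0) =
          (H (Psi y) - H (Psi x0)) - (H y - H x0) by ring.
        apply: (le_lt_trans (ler_normB _ _)); lra.
      by rewrite Dy0 sub0r normrN ltxx.
    rewrite /f gE => /eqP; rewrite eqe; apply/negP; rewrite mulf_neq0 //.
      by rewrite gt_eqF // expR_gt0.
    by have [_ _ /(_ Dy) /gt_eqF ->] := key_ineq _ (Delta y).
  have mB : measurable (cube x0 (del / 2)) by apply: Gbox_measurable; exact: cube_G.
  have : (mu (cube x0 (del / 2)) <= 0)%E.
    by rewrite -N0; exact: (le_measure mu (mem_set mB) (mem_set mN) sub).
  rewrite cubeE Hmu; last 2 first.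
  + by move=> j; rewrite !tnth_mktuple; lra.
  + by move=> j; rewrite !tnth_mktuple; lra.
  rewrite lee_fin leNgt => /negP; apply.
  apply: mulr_gt0; apply: prodr_gt0 => j _; rewrite !tnth_mktuple; lra.
Qed.
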